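(* Let $R$ be a von Neumann regular ring with identity, $G$ a group, and $\alpha: G\to\mathrm{Aut}(R)$ an action such that $1$ is the only element $g\in G$ for which $\alpha(g)$ is corner-inner. Then the skew group ring $R*_{\alpha}G$ is simple if and only if $R$ is $G$-simple.
   Context: For $g\in G$, $r\in R$ write ${}^g r=\alpha(g)(r)$. The skew group ring $R*_{\alpha}G$ is the free left $R$-module with basis $G$, with multiplication determined by those of $R$ and $G$ and $g r={}^g r\, g$, extended linearly. An ideal $I$ of $R$ is $G$-invariant if ${}^gI\subseteq I$ for all $g\in G$; $R$ is $G$-simple if $R\ne 0$ and its only $G$-invariant ideals are $0$ and $R$. An automorphism $f$ of $R$ is corner-inner if there exist a nonzero idempotent $e\in R$ and, setting $e'=f^{-1}(e)$, elements $u\in eRe'$ and $v\in e'Re$ such that $uv=e$, $vu=e'$, $f(x)=uxv$ for all $x\in e'Re'$, and $f^{-1}(y)=vyu$ for all $y\in eRe$. *)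

(* Defs.v *)
From HB Require Import structures.
From mathcomp Require Import all_boot all_order all_algebra.
From mathcomp Require Import finmap.
Set Implicit Arguments. Unset Strict Implicit. Unset Printing Implicit Defensive.
Import GRing.Theory.
Local Open Scope ring_scope.


Definition von_neumann_regular (R : pzRingType) : Prop :=
  forall a : R, exists x : R, a = a * x * a.

Definition is_ideal (R : pzRingType) (I : R -> Prop) : Prop :=
  [/\ I 0,
      (forall x y, I x -> I y -> I (x + y)),
      (forall x, I x -> I (- x)),
      (forall r x, I x -> I (r * x)) &
      (forall r x, I x -> I (x * r))].

Definition is_zero_ideal (R : pzRingType) (I : R -> Prop) : Prop :=
  forall x, I x <-> x = 0.
Definition is_full_ideal (R : pzRingType) (I : R -> Prop) : Prop :=
  forall x, I x.

Definition is_action (G : groupType) (R : pzRingType)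
    (alpha : G -> {rmorphism R -> R}) : Prop :=
  [/\ (forall g, bijective (alpha g)),
      (forall x, alpha 1%g x = x) &
      (forall g h x, alpha (g * h)%g x = alpha g (alpha h x))].

Definition G_invariant (G : groupType) (R : pzRingType)
    (alpha : G -> {rmorphism R -> R}) (I : R -> Prop) : Prop :=
  forall g x, I x -> I (alpha g x).

Definition G_simple (G : groupType) (R : pzRingType)
    (alpha : G -> {rmorphism R -> R}) : Prop :=
  (1 : R) != 0 /\
  forall I : R -> Prop, is_ideal I -> G_invariant alpha I ->
    is_zero_ideal I \/ is_full_ideal I.

Definition corner_inner (R : pzRingType) (f : R -> R) : Prop :=
  exists finv : R -> R, [/\ cancel f finv, cancel finv f &
  exists e : R, [/\ e * e = e, e != 0 &
    let e' := finv e in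
    exists u v : R,
      [/\ (exists r, u = e * r * e'),
          (exists r, v = e' * r * e),
          u * v = e /\ v * u = e',
          (forall x, (exists r, x = e' * r * e') -> f x = u * x * v) &
          (forall y, (exists r, y = e * r * e) -> finv y = v * y * u)]]].

(** Elements of R *_alpha G: finitely supported functions G -> R,
    i.e. the formal sums  sum_g r_g g  (r_g = the value at g). *)
Definition skew (G : groupType) (R : pzRingType) := {fsfun G -> R with 0}.

Section Skew.
Variables (G : groupType) (R : pzRingType) (alpha : G -> {rmorphism R -> R}).

Definition skew_zero : skew G R := [fsfun].

Definition skew_one : skew G R := [fsfun k in [fset (1%g : G)]%fset => (1 : R)].

Definition skew_add (a b : skew G R) : skew G R :=
  [fsfun k in (finsupp a `|` finsupp b)%fset => a k + b k].

Definition skew_opp (a : skew G R) : skew G R :=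
  [fsfun k in finsupp a => - a k].

(** (sum_g a_g g)(sum_h b_h h) = sum_{g,h} a_g (alpha g b_h) (g h):
    the coefficient at k is  sum_g a_g * alpha g (b_{g^-1 k}). *)
Definition skew_mul (a b : skew G R) : skew G R :=
  [fsfun k in [fset (g * h)%g | g in finsupp a, h in finsupp b]%fset =>
     \sum_(g <- finsupp a) a g * alpha g (b (g^-1 * k)%g)].

Definition skew_is_ideal (I : skew G R -> Prop) : Prop :=
  [/\ I skew_zero,
      (forall x y, I x -> I y -> I (skew_add x y)),
      (forall x, I x -> I (skew_opp x)),
      (forall r x, I x -> I (skew_mul r x)) &
      (forall r x, I x -> I (skew_mul x r))].

Definition skew_simple : Prop :=
  skew_one != skew_zero /\
  forall I : skew G R -> Prop, skew_is_ideal I ->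
    (forall x, I x <-> x = skew_zero) \/ (forall x, I x).

End Skew.

(* Main.v *)
Require Import Defs.
From HB Require Import structures.
From mathcomp Require Import all_boot all_order all_algebra.
From mathcomp Require Import finmap.
From Stdlib Require Import Classical.

Set Implicit Arguments. Unset Strict Implicit. Unset Printing Implicit Defensive.

Section Helpers.
Import GRing.Theory.
Local Open Scope ring_scope.
Variables (G : groupType) (R : pzRingType) (alpha : G -> {rmorphism R -> R}).

Implicit Types (a b : Defs.skew G R).
Definition sc (s : R) (h : G) : Defs.skew G R := [fsfun k in [fset (h : G)]%fset => (s : R)].

Lemma scE s h k : sc s h k = if k == h then s else 0.
Proof. by rewrite /sc fsfunE inE. Qed.

Lemma skew_zeroE k : skew_zero G R k = 0.
Proof. by rewrite /skew_zero fsfunE. Qed.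

Lemma skew_addE a b k : skew_add a b k = a k + b k.
Proof.
rewrite /skew_add fsfunE; case: ifP => // /negbT.
rewrite inE negb_or !memNfinsupp => /andP[/eqP -> /eqP ->]; by rewrite addr0.
Qed.

Lemma skew_oppE a k : skew_opp a k = - a k.
Proof.
rewrite /skew_opp fsfunE; case: ifP => // /negbT.
by rewrite memNfinsupp => /eqP ->; rewrite oppr0.
Qed.

Lemma skew_mulE a b k :
  skew_mul alpha a b k = \sum_(g <- finsupp a) a g * alpha g (b (g^-1 * k)%g).
Proof.
rewrite /skew_mul fsfunE; case: ifP => // Hk.
symmetry; rewrite big_seq; apply: big1 => g ga.
case: (boolP (g^-1 * k \in finsupp b)%g) => [gb|].
  exfalso; move/negbT: Hk => /negP; apply; apply/imfset2P.
  exists g => //; exists (g^-1 * k)%g => //; by rewrite mulVKg.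
by rewrite memNfinsupp => /eqP ->; rewrite rmorph0 mulr0.
Qed.

Lemma finsupp_sc s h : (finsupp (sc s h) `<=` [fset h])%fset.
Proof.
apply/fsubsetP => x; rewrite mem_finsupp scE inE; by case: (x == h); rewrite ?eqxx.
Qed.

Lemma mul_scl s g b k :
  skew_mul alpha (sc s g) b k = s * alpha g (b (g^-1 * k)%g).
Proof.
rewrite skew_mulE (big_fset_incl _ (finsupp_sc s g)).
  by rewrite big_seq_fset1 scE eqxx.
move=> x _; rewrite memNfinsupp => /eqP ->; by rewrite mul0r.
Qed.

Lemma mul_scr (act : is_action alpha) b t k :
  skew_mul alpha b (sc t 1%g) k = b k * alpha k t.
Proof.
have term g : b g * alpha g (sc t 1%g (g^-1 * k)%g) = if g == k then b k * alpha k t else 0.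
  rewrite scE; case: (eqVneq g k) => [->|ne]; first by rewrite mulVg eqxx.
  case: ifP => [/eqP E|_]; last by rewrite rmorph0 mulr0.
  by exfalso; move/eqP: ne; apply; rewrite -(mulVKg g k) E mulg1.
rewrite skew_mulE.
case: (boolP (k \in finsupp b)) => kb.
  rewrite (bigD1_seq k) ?fset_uniq //= term eqxx big1 ?addr0 // => g /negPf gk.
  by rewrite term gk.
rewrite big_seq big1; last by move=> g gb; rewrite term; case: eqP => // E; rewrite -E gb in kb.
by move: kb; rewrite memNfinsupp => /eqP ->; rewrite mul0r.
Qed.

End Helpers.

Section Core.
Import GRing.Theory.
Local Open Scope ring_scope.
Variables (G : groupType) (R : pzRingType) (alpha : G -> {rmorphism R -> R}).
Hypothesis act : is_action alpha.

Lemma aK g x : alpha g (alpha g^-1 x) = x.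
Proof. case: act => _ a1 aM; by rewrite -aM mulgV a1. Qed.

Lemma aKV g x : alpha g^-1 (alpha g x) = x.
Proof. case: act => _ a1 aM; by rewrite -aM mulVg a1. Qed.

Lemma aM' g h x : alpha g (alpha h x) = alpha (g * h)%g x.
Proof. case: act => _ a1 aM; by rewrite aM. Qed.

Lemma core (vnr : von_neumann_regular R) g (e u : R) :
  e * e = e -> u != 0 -> e * u = u ->
  (forall r, e * r * e * u = u * alpha g (e * r * e)) ->
  corner_inner (alpha g^-1).
Proof.
move=> ee unz eu H.
have [w0 Hw0] := vnr u.
pose w := w0 * e; pose p := u * w.
have uwu : u * w * u = u by rewrite /w !mulrA -(mulrA _ e) eu -Hw0.
have pu : p * u = u by rewrite /p uwu.
have pp : p * p = p by rewrite /p mulrA uwu.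
have p0 : p != 0 by apply: contra unz => /eqP p0; rewrite -pu p0 mul0r.
have ep : e * p = p by rewrite /p mulrA eu.
have pe : p * e = p by rewrite /p /w -!mulrA ee.
have pdef : p = u * w by [].
clearbody p w.
have Hx x : x = p * x * p -> x * u = u * alpha g x.
  move=> xp; have exe : e * x * e = x by rewrite xp !mulrA ep -!mulrA pe.
  by have := H x; rewrite exe.
have uap : u * alpha g p = u by rewrite -(Hx p) ?pu // !pp.
have agpp : alpha g p * alpha g p = alpha g p by rewrite -rmorphM pp.
have phi y : y = alpha g p * y * alpha g p -> alpha g^-1 y = u * y * w.
  move=> yp; set x := alpha g^-1 y.
  have xp : x = p * x * p by rewrite /x {1}yp !rmorphM aKV.
  have ex : x * u = u * y by rewrite (Hx x xp) /x aK.
  have xp' : x * p = x by rewrite xp -!mulrA pp.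
  by rewrite -xp' pdef mulrA ex.
have tE : alpha g p * w * u = alpha g p.
  have ht : alpha g^-1 (alpha g p * w * u) = p.
    rewrite phi; last by rewrite -!mulrA uap !mulrA agpp.
    by rewrite !mulrA uap -pdef -(mulrA p) -pdef pp.
  by rewrite -[LHS](aK g) ht.
exists (alpha g); split.
- by move=> x; rewrite aK.
- by move=> x; rewrite aKV.
exists p; split => //=.
exists u, (alpha g p * w * p); split.
- by exists u; rewrite pu uap.
- by exists w.
- split; first by rewrite !mulrA uap -pdef pp.
  by rewrite -mulrA pu tE.
- move=> x [r xr].
  have xx : x = alpha g p * x * alpha g p by rewrite xr !mulrA agpp -!mulrA agpp.
  have xa : x * alpha g p = x by rewrite xr -!mulrA agpp.
  rewrite !mulrA -(mulrA u x) xa -(phi x xx).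
  have : alpha g^-1 x = p * alpha g^-1 r * p by rewrite xr !rmorphM aKV.
  by move=> ->; rewrite -!mulrA pp.
- move=> y [r yr].
  have yy : y = p * y * p by rewrite yr !mulrA pp -!mulrA pp.
  have py : p * y = y by rewrite yr !mulrA pp.
  rewrite -(mulrA _ p y) py -mulrA (Hx y yy) !mulrA -(mulrA _ w u) mulrA tE.
  by rewrite -rmorphM py.
Qed.

End Core.

Section Main.
Import GRing.Theory.
Local Open Scope ring_scope.
Variables (G : groupType) (R : pzRingType) (alpha : G -> {rmorphism R -> R}).
Hypothesis act : is_action alpha.
Implicit Types (a b : Defs.skew G R).

Lemma a1 x : alpha 1%g x = x.
Proof. by case: act. Qed.

Lemma eqVmul (g k h : G) : (g^-1 * k == h)%g = (k == g * h)%g.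
Proof. by apply/eqP/eqP => [<-|->]; rewrite ?mulVKg ?mulKg. Qed.

Lemma sc_mul s g t h :
  skew_mul alpha (sc s g) (sc t h) = sc (s * alpha g t) (g * h)%g.
Proof.
apply/fsfunP => k; rewrite mul_scl !scE eqVmul.
by case: ifP => _ //; rewrite rmorph0 mulr0.
Qed.

Lemma skew_eq0 a : (forall k, a k = 0) -> a = skew_zero G R.
Proof. by move=> H; apply/fsfunP => k; rewrite H skew_zeroE. Qed.

Lemma nz_supp a : a <> skew_zero G R -> exists h, h \in finsupp a.
Proof.
move=> anz; case: (fset_0Vmem (finsupp a)) => [E|[h ha]]; last by exists h.
exfalso; apply: anz; apply: skew_eq0 => k; apply: fsfun_dflt; by rewrite E inE.
Qed.

Hypothesis vnr : von_neumann_regular R.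
Hypothesis outer : forall g : G, corner_inner (alpha g) -> g = 1%g.

Lemma step (J : Defs.skew G R -> Prop) : skew_is_ideal alpha J ->
  forall n a, J a -> a <> skew_zero G R -> (#|` finsupp a| <= n)%N ->
  exists e, e != 0 /\ J (sc e 1%g).
Proof.
case=> J0 JD JN JL JR.
elim=> [|n IH] a Ja anz hc.
  have [h ha] := nz_supp anz.
  by move: hc; rewrite (cardfsD1 h) ha.
have [h ha] := nz_supp anz.
have [r0 r0def] : exists r0, r0 = a h by eexists.
have r0nz : r0 != 0 by rewrite r0def -mem_finsupp.
have [x Hx] := vnr r0.
have [e edef] : exists e, e = x * r0 by eexists.
have ee : e * e = e by rewrite edef -!mulrA (mulrA r0) -Hx.
have enz : e != 0.
  by apply: contra r0nz => /eqP e0; rewrite Hx -mulrA -edef e0 mulr0.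
have exr : e * x * r0 = e by rewrite -mulrA -edef ee.
pose b := skew_mul alpha (sc (e * x) 1%g) a.
have Jb : J b by apply: JL.
have bE k : b k = e * x * a k by rewrite /b mul_scl invg1 mul1g a1.
have bh : b h = e by rewrite bE -r0def exr.
pose c r := skew_add (skew_mul alpha (sc (e * r * e) 1%g) b)
                     (skew_opp (skew_mul alpha b (sc (alpha h^-1 (e * r * e)) 1%g))).
have Jc r : J (c r) by apply: JD; [apply: JL | apply: JN; apply: JR].
have cE r k : c r k = e * r * e * b k - b k * alpha (k * h^-1)%g (e * r * e).
  by rewrite skew_addE skew_oppE mul_scl (mul_scr act) invg1 mul1g a1 (aM' act).
case: (classic (exists r, c r <> skew_zero G R)) => [[r cnz]|allc].
  apply: (IH (c r)) => //.
  have sub : (finsupp (c r) `<=` finsupp a `\ h)%fset.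
    apply/fsubsetP => k; rewrite mem_finsupp => ck; apply/fsetD1P; split.
      apply: contra ck => /eqP ->; rewrite cE bh mulgV a1.
      by rewrite -!mulrA ee !mulrA ee subrr.
    apply: contraR ck; rewrite memNfinsupp => /eqP ak.
    by rewrite cE bE ak !(mulr0, mul0r) subrr.
  move: hc; rewrite (cardfsD1 h) ha add1n ltnS => hc.
  exact: leq_trans (fsubset_leq_card sub) hc.
have c0 r : c r = skew_zero G R.
  by apply: NNPP => cnz; apply: allc; exists r.
have bk k : k != h -> b k = 0.
  move=> kh; case: (eqVneq (b k) 0) => // bnz; exfalso.
  have eb : e * b k = b k by rewrite bE !mulrA ee.
  have H r : e * r * e * b k = b k * alpha (k * h^-1)%g (e * r * e).
    by apply/eqP; rewrite -subr_eq0 -cE c0 skew_zeroE.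
  have := outer (core act vnr ee bnz eb H).
  move/eqP; rewrite invg_eq1 => /eqP kh1.
  by move/eqP: kh; apply; rewrite -(mulgVK h k) kh1 mul1g.
have bsc : b = sc e h.
  apply/fsfunP => k; rewrite scE; case: (eqVneq k h) => [->|kh]; first by [].
  exact: bk.
exists e; split => //.
have -> : sc e 1%g = skew_mul alpha b (sc 1 h^-1).
  by rewrite bsc sc_mul rmorph1 mulr1 mulgV.
exact: JR.
Qed.

End Main.

Section Dirs.
Import GRing.Theory.
Local Open Scope ring_scope.
Variables (G : groupType) (R : pzRingType) (alpha : G -> {rmorphism R -> R}).
Hypothesis act : is_action alpha.

Lemma dir1 : skew_simple alpha -> G_simple alpha.
Proof.
case=> one0 Hs; split.
  apply/eqP => E; move/eqP: one0; apply; apply/fsfunP => k.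
  rewrite (_ : skew_one G R = sc 1 (1%g : G)) // scE skew_zeroE E; by case: ifP.
move=> I [I0 ID IN IL IR] Iinv.
pose IJ (a : Defs.skew G R) := forall k, I (a k).
have sum_in (s : seq G) F : (forall g, I (F g)) -> I (\sum_(g <- s) F g).
  by move=> HF; apply: big_ind => //; apply: ID.
have HIJ : skew_is_ideal alpha IJ.
  split.
  - by move=> k; rewrite skew_zeroE.
  - by move=> x y Hx Hy k; rewrite skew_addE; apply: ID.
  - by move=> x Hx k; rewrite skew_oppE; apply: IN.
  - move=> r x Hx k; rewrite skew_mulE; apply: sum_in => g.
    by apply: IL; apply: Iinv.
  - move=> r x Hx k; rewrite skew_mulE; apply: sum_in => g.
    by apply: IR.
case: (Hs IJ HIJ) => [Hz|Hf].
  left => x; split; last by move=> ->.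
  move=> Ix.
  have : IJ (sc x (1%g : G)) by move=> k; rewrite scE; case: ifP.
  move/Hz => E; by have := congr1 (fun f : Defs.skew G R => f (1%g : G)) E; rewrite scE eqxx skew_zeroE.
right => r; have := Hf (sc 1 (1%g : G)) (1%g : G); rewrite scE eqxx => I1.
by rewrite -(mulr1 r); apply: IL.
Qed.

Hypothesis vnr : von_neumann_regular R.
Hypothesis outer : forall g : G, corner_inner (alpha g) -> g = 1%g.

Lemma dir2 : G_simple alpha -> skew_simple alpha.
Proof.
case=> one0 Hs; split.
  apply/eqP => E; move/eqP: one0; apply.
  have := congr1 (fun f : Defs.skew G R => f (1%g : G)) E.
  by rewrite (_ : skew_one G R = sc 1 (1%g : G)) // scE eqxx skew_zeroE => ->.
move=> J HJ; have [J0 JD JN JL JR] := HJ.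
case: (classic (exists a, J a /\ a <> skew_zero G R)) => [[a [Ja anz]]|none]; last first.
  left => x; split; last by move=> ->.
  by move=> Jx; apply: NNPP => xnz; apply: none; exists x.
have [e [enz Je]] := step act vnr outer HJ Ja anz (leqnn _).
pose IR (r : R) := J (sc r (1%g : G)).
have sc0 : sc 0 (1%g : G) = skew_zero G R.
  by apply/fsfunP => k; rewrite scE skew_zeroE; case: ifP.
have HIR : is_ideal IR.
  split.
  - by rewrite /IR sc0.
  - move=> x y Hx Hy; rewrite /IR.
    have -> : sc (x + y) (1%g : G) = skew_add (sc x (1%g : G)) (sc y (1%g : G)).
      by apply/fsfunP => k; rewrite skew_addE !scE; case: ifP; rewrite ?addr0.
    exact: JD.
  - move=> x Hx; rewrite /IR.
    have -> : sc (- x) (1%g : G) = skew_opp (sc x (1%g : G)).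
      by apply/fsfunP => k; rewrite skew_oppE !scE; case: ifP; rewrite ?oppr0.
    exact: JN.
  - move=> r x Hx; rewrite /IR.
    have -> : sc (r * x) (1%g : G) = skew_mul alpha (sc r (1%g : G)) (sc x (1%g : G)).
      by rewrite sc_mul a1 // mulg1.
    exact: JL.
  - move=> r x Hx; rewrite /IR.
    have -> : sc (x * r) (1%g : G) = skew_mul alpha (sc x (1%g : G)) (sc r (1%g : G)).
      by rewrite sc_mul a1 // mulg1.
    exact: JR.
have HIRi : G_invariant alpha IR.
  move=> g x Hx; rewrite /IR.
  have -> : sc (alpha g x) (1%g : G) =
      skew_mul alpha (skew_mul alpha (sc 1 g) (sc x (1%g : G))) (sc 1 g^-1).
    by rewrite !sc_mul rmorph1 mulr1 mul1r mulg1 mulgV.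
  by apply: JR; apply: JL.
case: (Hs IR HIR HIRi) => [Hz|Hf].
  by move/eqP: enz; case; apply/Hz.
right => x.
have -> : x = skew_mul alpha (sc 1 (1%g : G)) x.
  by apply/fsfunP => k; rewrite mul_scl invg1 mul1g a1 // mul1r.
exact: JR (Hf 1).
Qed.

End Dirs.

Unset Implicit Arguments.

Theorem theorem2p8 (R : pzRingType) (G : groupType)
    (alpha : G -> {rmorphism R -> R}) :
  von_neumann_regular R ->
  is_action alpha ->
  (forall g : G, corner_inner (alpha g) -> g = 1%g) ->
  (skew_simple alpha <-> G_simple alpha).
Proof.
move=> vnr act outer; split; [exact: dir1 | exact: dir2].
Qed.
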